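(* Let $p,q$ be nonzero polynomials. Then $[p]=[q]$ in $\mathcal H$ if and only if $R(p)=R(q)$ (as multisets).
   Context: Standing assumptions: $\Omega\subset\mathbb C$ is a domain with $0\in\Omega$, $\mathcal H$ is a Hilbert space of analytic functions on $\Omega$ with bounded point evaluations at points of $\Omega$, the shift $(Sf)(z)=zf(z)$ is bounded on $\mathcal H$, and the polynomials $\mathcal P$ are dense in $\mathcal H$. For $g\in\mathcal H$, $[g]$ is the closure in $\mathcal H$ of $\operatorname{span}\{z^kg:k\ge0\}$. A point $\beta\in\mathbb C$ is reproducible of order $m\ge0$ if $p\mapsto p^{(m)}(\beta)$ on $\mathcal P$ extends to a bounded linear functional on $\mathcal H$; $\beta$ is a reproducible point if reproducible of order $0$; reproducibility of order $m$ implies that of all orders $j\le m$; $\operatorname{ro}(\beta)\in\{0,1,\dots\}\cup\{\infty\}$ is the supremum of orders of reproducibility. For a nonzero polynomial $p$, $R(p)$ is the multiset of reproducible zeros: each reproducible point $\beta$ at which $p$ has a zero of order $m\ge1$ is listed $\min\{m,\operatorname{ro}(\beta)+1\}$ times; non-reproducible zeros are omitted. *)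

(* Defs.v *)
From HB Require Import structures.
From mathcomp Require Import all_boot all_order all_algebra.
From mathcomp Require Import all_classical all_reals all_analysis.
From mathcomp Require Import complex.
Import Order.TTheory GRing.Theory Num.Theory.
Import numFieldNormedType.Exports.

Set Implicit Arguments.
Unset Strict Implicit.
Unset Printing Implicit Defensive.

Local Open Scope classical_set_scope.
Local Open Scope ring_scope.

Definition CC (R : realType) : numClosedFieldType := R[i].

(** A domain: nonempty (here 0 ∈ Ω is assumed separately), open, connected. *)
Definition is_domain (R : realType) (Om : set (CC R)) : Prop :=
  open Om /\ connected Om.

Definition analytic_on (R : realType) (Om : set (CC R)) (f : CC R -> CC R) : Prop :=
  forall z0, Om z0 ->
    exists r : CC R, 0 < r /\
    exists a : nat -> CC R,
      forall z, Om z -> `|z - z0| < r ->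
        (fun n : nat => \sum_(k < n) a k * (z - z0) ^+ k) @ \oo --> f z.

Definition inner_product (R : realType) (V : lmodType (CC R))
    (ip : V -> V -> CC R) : Prop :=
  [/\ (forall (a : CC R) (x y z : V), ip (a *: x + y) z = a * ip x z + ip y z),
      (forall x y : V, ip y x = (ip x y)^*),
      (forall x : V, 0 <= ip x x) &
      (forall x : V, ip x x = 0 -> x = 0)].

(** The induced norm ||x|| = sqrt <x,x> (a nonnegative real, stored in CC R). *)
Definition hnorm (R : realType) (V : lmodType (CC R)) (ip : V -> V -> CC R)
    (x : V) : CC R := sqrtC (ip x x).

Definition ip_complete (R : realType) (V : lmodType (CC R))
    (ip : V -> V -> CC R) : Prop :=
  forall u : nat -> V,
    (forall e : CC R, 0 < e -> exists N : nat, forall m n : nat,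
        (N <= m)%N -> (N <= n)%N -> hnorm ip (u m - u n) < e) ->
    exists l : V, forall e : CC R, 0 < e -> exists N : nat, forall n : nat,
        (N <= n)%N -> hnorm ip (u n - l) < e.

Definition represents (R : realType) (Om : set (CC R)) (V : lmodType (CC R))
    (ev : V -> CC R -> CC R) (f : V) (p : {poly CC R}) : Prop :=
  forall z, Om z -> ev f z = p.[z].

(** H is the Hilbert space (V, ip) (complete inner
    product space over CC R); its elements are functions on Om via ev, which
    is linear and injective (as maps on Om), every element is analytic on Om,
    point evaluations at points of Om are bounded; S is the shift
    (Sf)(z) = z f(z), which maps H to H and is bounded; the polynomials
    belong to H and are dense in H. *)
Definition standing_assumptions (R : realType) (Om : set (CC R))
    (V : lmodType (CC R)) (ip : V -> V -> CC R) (ev : V -> CC R -> CC R)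
    (S : V -> V) : Prop :=
  [/\ (is_domain Om /\ Om 0) /\ (inner_product ip /\ ip_complete ip),
      ((forall (a : CC R) (f g : V) z, Om z -> ev (a *: f + g) z = a * ev f z + ev g z)
       /\ (forall f : V, (forall z, Om z -> ev f z = 0) -> f = 0)),
      ((forall f : V, analytic_on Om (ev f))
       /\ (forall z, Om z -> exists M : CC R, forall f : V, `|ev f z| <= M * hnorm ip f)),
      ((forall (f : V) z, Om z -> ev (S f) z = z * ev f z)
       /\ (exists M : CC R, forall f : V, hnorm ip (S f) <= M * hnorm ip f)) &
      ((forall p : {poly CC R}, exists f : V, represents Om ev f p)
       /\ (forall (f : V) (e : CC R), 0 < e ->
            exists (p : {poly CC R}) (g : V),
              represents Om ev g p /\ hnorm ip (f - g) < e))].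

(** [g] : closure in H of span{ z^k g : k >= 0 } = closure of { r(S) g : r polynomial }. *)
Definition cyc (R : realType) (V : lmodType (CC R)) (ip : V -> V -> CC R)
    (S : V -> V) (g : V) : set V :=
  fun x => forall e : CC R, 0 < e ->
    exists r : {poly CC R},
      hnorm ip (x - \sum_(k < size r) r`_k *: iter k S g) < e.

Definition reproducible (R : realType) (Om : set (CC R)) (V : lmodType (CC R))
    (ip : V -> V -> CC R) (ev : V -> CC R -> CC R) (beta : CC R) (m : nat) : Prop :=
  exists L : V -> CC R,
    [/\ (forall (a : CC R) (x y : V), L (a *: x + y) = a * L x + L y),
        (exists M : CC R, forall x : V, `|L x| <= M * hnorm ip x) &
        (forall (p : {poly CC R}) (f : V), represents Om ev f p ->
            L f = (p^`(m)).[beta])].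

(** ro(beta) >= n, where ro(beta) = sup of orders of reproducibility. *)
Definition ro_ge (R : realType) (Om : set (CC R)) (V : lmodType (CC R))
    (ip : V -> V -> CC R) (ev : V -> CC R -> CC R) (beta : CC R) (n : nat) : Prop :=
  exists j : nat, (n <= j)%N /\ reproducible Om ip ev beta j.

(** Multiplicity of beta in the multiset R(p): if beta is a reproducible point
    and p has a zero of order m = mup beta p at beta, it is
    min(m, ro(beta)+1) = #{ n < m | ro(beta) >= n }; otherwise 0
    (for m = 0 the count is 0, i.e. non-zeros are not listed). *)
Definition Rmult (R : realType) (Om : set (CC R)) (V : lmodType (CC R))
    (ip : V -> V -> CC R) (ev : V -> CC R -> CC R) (p : {poly CC R})
    (beta : CC R) : nat :=
  if `[< reproducible Om ip ev beta 0 >] then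
    (\sum_(n < mup beta p) (`[< ro_ge Om ip ev beta n >] : nat))%N
  else 0%N.

(* Main.v *)
Require Import Defs.
From HB Require Import structures.
From mathcomp Require Import all_boot all_order all_algebra.
From mathcomp Require Import all_classical all_reals all_analysis.
From mathcomp Require Import complex.
From mathcomp Require Import ring lra zify.
Import Order.TTheory GRing.Theory Num.Theory.
Import numFieldNormedType.Exports.
Local Open Scope classical_set_scope.
Local Open Scope ring_scope.
Set Implicit Arguments.
Unset Strict Implicit.
Unset Printing Implicit Defensive.
Section Norms.
Variables (R : realType) (V : lmodType (CC R)) (ip : V -> V -> CC R).
Hypothesis Hip : inner_product ip.
Local Notation N := (hnorm ip).

Lemma ipA a x y z : ip (a *: x + y) z = a * ip x z + ip y z.
Proof. by case: Hip. Qed.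
Lemma ipC x y : ip y x = (ip x y)^*.
Proof. by case: Hip. Qed.
Lemma ip_ge0 x : 0 <= ip x x.
Proof. by case: Hip. Qed.
Lemma ip_eq0 x : ip x x = 0 -> x = 0.
Proof. by case: Hip => _ _ _; apply. Qed.

Lemma ipDl x y z : ip (x + y) z = ip x z + ip y z.
Proof. by rewrite -[x]scale1r ipA mul1r scale1r. Qed.
Lemma ip0l z : ip 0 z = 0.
Proof.
have h := ipDl 0 0 z; rewrite addr0 in h.
by apply: (addrI (ip 0 z)); rewrite addr0 -h.
Qed.
Lemma ipZl a x z : ip (a *: x) z = a * ip x z.
Proof. by rewrite -[a *: x]addr0 ipA ip0l addr0. Qed.
Lemma ipNl x z : ip (- x) z = - ip x z.
Proof. by rewrite -scaleN1r ipZl mulN1r. Qed.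
Lemma ipBl x y z : ip (x - y) z = ip x z - ip y z.
Proof. by rewrite ipDl ipNl. Qed.
Lemma ipDr x y z : ip z (x + y) = ip z x + ip z y.
Proof. by rewrite (ipC _ z) ipDl rmorphD (ipC x z) (ipC y z). Qed.
Lemma ipZr a x z : ip z (a *: x) = a^* * ip z x.
Proof. by rewrite (ipC _ z) ipZl rmorphM (ipC x z). Qed.
Lemma ipNr x z : ip z (- x) = - ip z x.
Proof. by rewrite (ipC _ z) ipNl rmorphN (ipC x z). Qed.
Lemma ipBr x y z : ip z (x - y) = ip z x - ip z y.
Proof. by rewrite ipDr ipNr. Qed.
Lemma ip0r z : ip z 0 = 0.
Proof. by rewrite (ipC _ z) ip0l rmorph0. Qed.

Lemma N_ge0 x : 0 <= N x.
Proof. by rewrite /hnorm sqrtC_ge0 ip_ge0. Qed.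
Lemma N_real x : N x \is Num.real.
Proof. exact/ger0_real/N_ge0. Qed.
Lemma N0 : N 0 = 0.
Proof. by rewrite /hnorm ip0l sqrtC0. Qed.
Lemma NsqE x : N x ^+ 2 = ip x x.
Proof. by rewrite /hnorm sqrtCK. Qed.

Lemma NZ a x : N (a *: x) = `|a| * N x.
Proof.
rewrite /hnorm ipZl ipZr mulrA -normCK sqrtCM ?sqrCK //.
all: rewrite ?qualifE /= ?exprn_ge0 ?ip_ge0 //.
Qed.
Lemma NN x : N (- x) = N x.
Proof. by rewrite -scaleN1r NZ normrN normr1 mul1r. Qed.
Lemma NB x y : N (x - y) = N (y - x).
Proof. by rewrite -NN opprB. Qed.

Lemma CS_sq x y : `|ip x y| ^+ 2 <= ip x x * ip y y.
Proof.
have [y0|yn0] := eqVneq (ip y y) 0.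
  by rewrite y0 (ip_eq0 y0) ip0r normr0 expr0n /= mulr0.
set b := ip y y; set a := ip x y; set c := ip x x.
have b_gt0 : 0 < b by rewrite lt_def yn0 ip_ge0.
have bJ : b^* = b by rewrite geC0_conj // ip_ge0.
have := ip_ge0 (b *: x - a *: y).
rewrite ipBl !ipBr !ipZl !ipZr -/a -/b -/c (ipC x y) -/a bJ.
have -> : b * (b * c) - b * (a^* * a) - (a * (b * a^*) - a * (a^* * b))
   = b * (b * c - a * a^*) by ring.
by rewrite pmulr_rge0 // subr_ge0 normCK [c * b]mulrC.
Qed.

Lemma CS x y : `|ip x y| <= N x * N y.
Proof.
have h : sqrtC (`|ip x y| ^+ 2) <= sqrtC (ip x x * ip y y).
  by rewrite ler_sqrtC ?CS_sq // qualifE /= ?exprn_ge0 ?mulr_ge0 ?ip_ge0.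
rewrite sqrCK ?normr_ge0 // in h.
by rewrite /hnorm -sqrtCM // qualifE /= ip_ge0.
Qed.

Lemma NDle x y : N (x + y) <= N x + N y.
Proof.
have h1 : 0 <= N x + N y by rewrite addr_ge0 ?N_ge0.
have e1 : ip (x + y) (x + y) = ip x x + ip y y + (ip x y + (ip x y)^*).
  by rewrite ipDl !ipDr (ipC x y); ring.
have e2 : (N x + N y) ^+ 2 = ip x x + ip y y + (N x * N y) *+ 2.
  by rewrite sqrrD !NsqE; ring.
have h2 : ip x y + (ip x y)^* <= (N x * N y) *+ 2.
  have -> : ip x y + (ip x y)^* = 'Re (ip x y) *+ 2.
    by rewrite ReE; field.
  apply: ler_wMn2r.
  exact: le_trans (leif_Re_Creal _).1 (CS x y).
have h3 : ip (x + y) (x + y) <= (N x + N y) ^+ 2 by rewrite e1 e2 lerD2l.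
have h4 : sqrtC (ip (x + y) (x + y)) <= sqrtC ((N x + N y) ^+ 2).
  by rewrite ler_sqrtC // qualifE /= ?ip_ge0 ?exprn_ge0.
by rewrite sqrCK in h4.
Qed.

Lemma NBle x y : N (x - y) <= N x + N y.
Proof. by rewrite -(NN y) NDle. Qed.

Lemma N_sum (I : Type) (r : seq I) (f : I -> V) :
  N (\sum_(i <- r) f i) <= \sum_(i <- r) N (f i).
Proof.
elim: r => [|i r IH]; first by rewrite !big_nil N0.
rewrite !big_cons; apply: le_trans (NDle _ _) _; exact: lerD.
Qed.

End Norms.
Section RealFacts.
Variable R : realType.

Lemma sup_center (T : Type) (t0 : T) (x d : T -> R) :
  (forall u v, x u - x v <= d u + d v) -> exists c, forall u, `|x u - c| <= d u.
Proof.
move=> H.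
pose E := fun r : R => exists u, r = x u - d u.
have ub : forall v, ubound E (x v + d v).
  move=> v r [u ->]; have := H u v; lra.
have hs : has_sup E.
  split; first by exists (x t0 - d t0); exists t0.
  by exists (x t0 + d t0); apply: ub.
exists (sup E) => u; rewrite ler_norml; apply/andP; split.
- have : sup E <= x u + d u by apply: ge_sup (ub u); case: hs.
  lra.
- have : x u - d u <= sup E by apply: sup_upper_bound => //; exists u.
  lra.
Qed.

Lemma Re_le_normc (z : R[i]) : complex.Re z <= Num.sqrt (complex.Re z ^+ 2 + complex.Im z ^+ 2).
Proof.
apply: le_trans (ler_norm _) _.
rewrite -sqrtr_sqr ler_sqrt ?addr_ge0 ?sqr_ge0 //.
by rewrite lerDl sqr_ge0.
Qed.

Lemma Im_le_normc (z : R[i]) : complex.Im z <= Num.sqrt (complex.Re z ^+ 2 + complex.Im z ^+ 2).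
Proof.
apply: le_trans (ler_norm _) _.
rewrite -sqrtr_sqr ler_sqrt ?addr_ge0 ?sqr_ge0 //.
by rewrite lerDr sqr_ge0.
Qed.

Lemma sup_centerC (T : Type) (t0 : T) (a : T -> R[i]) (d : T -> R) :
  (forall u v, `|a u - a v| <= (d u + d v)%:C%C) ->
  exists c, forall u, `|a u - c| <= (2 * d u)%:C%C.
Proof.
move=> H.
have : forall u v, complex.Re (a u) - complex.Re (a v) <= d u + d v.
  move=> u v; have := H u v; rewrite normc_def lecR => h.
  apply: le_trans h; rewrite -raddfB /=.
  exact: Re_le_normc.
move/(sup_center t0) => [cx hx].
have : forall u v, complex.Im (a u) - complex.Im (a v) <= d u + d v.
  move=> u v; have := H u v; rewrite normc_def lecR => h.
  apply: le_trans h; rewrite -raddfB /=.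
  exact: Im_le_normc.
move/(sup_center t0) => [cy hy].
exists (Complex cx cy) => u; rewrite normc_def lecR.
have := hx u; have := hy u.
case: (a u) => ar ai /=.
set X := ar - cx; set Y := ai - cy => hY hX.
have d0 : 0 <= d u by apply: le_trans hX; exact: normr_ge0.
have -> : 2 * d u = Num.sqrt ((2 * d u) ^+ 2) by rewrite sqrtr_sqr ger0_norm ?mulr_ge0.
rewrite ler_sqrt ?sqr_ge0 //.
have hX2 : X ^+ 2 <= d u ^+ 2 by rewrite -real_normK ?num_real // lerXn2r ?nnegrE ?normr_ge0.
have hY2 : Y ^+ 2 <= d u ^+ 2 by rewrite -real_normK ?num_real // lerXn2r ?nnegrE ?normr_ge0.
have : 0 <= d u ^+ 2 by apply: sqr_ge0.
nra.
Qed.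

End RealFacts.

Lemma le_normM (F : numDomainType) (a M n : F) :
  a \is Num.real -> 0 <= n -> a <= M * n -> a <= `|M| * n.
Proof.
move=> ar n0 h.
have Mr : M * n \is Num.real.
  by rewrite -(subrK a (M * n)) rpredD // (lerB_real h).
apply: le_trans h _; apply: le_trans (real_ler_norm Mr) _.
by rewrite normrM (ger0_norm n0).
Qed.

Lemma small_mul (F : numFieldType) (K e : F) : 0 <= K -> 0 < e ->
  0 < e / (K + 1) /\ K * (e / (K + 1)) < e.
Proof.
move=> K0 e0; have K1 : 0 < K + 1 by rewrite ltr_wpDl.
split; first by rewrite divr_gt0.
by rewrite mulrA ltr_pdivrMr // mulrDr mulr1 [K * e]mulrC ltrDl.
Qed.

Lemma ReC_ge0 (R : rcfType) (z : R[i]) : 0 <= z -> (complex.Re z)%:C%C = z.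
Proof. by move=> h; have := ger0_Im h; case: z h => a b /= _ ->. Qed.

Lemma realC_mul2 (R : rcfType) (x : R) : ((2 * x)%:C)%C = 2 * (x%:C)%C.
Proof. by rewrite rmorphM /= rmorph_nat. Qed.
Section PolyDeriv.
Variable K : numFieldType.
Implicit Types (v w u q : {poly K}) (b : K).

Lemma derivn_XsubCM b v j :
  (('X - b%:P) * v)^`(j.+1) = ('X - b%:P) * v^`(j.+1) + v^`(j) *+ j.+1.
Proof.
elim: j => [|j IH].
  by rewrite derivn1 derivM derivXsubC mul1r derivn0 derivn1 mulr1n addrC.
rewrite derivnS IH derivD derivM derivXsubC mul1r derivMn -!derivnS.
by rewrite [v^`(j.+1) *+ j.+2]mulrS addrCA addrA.
Qed.

Lemma horner_derivn_XsubCM b v j :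
  ((('X - b%:P) * v)^`(j.+1)).[b] = j.+1%:R * (v^`(j)).[b].
Proof.
by rewrite derivn_XsubCM hornerD hornerM hornerXsubC subrr mul0r add0r hornerMn mulr_natl.
Qed.

Lemma horner_XsubCM b v : (('X - b%:P) * v).[b] = 0.
Proof. by rewrite hornerM hornerXsubC subrr mul0r. Qed.

Lemma derivn_XsubCX_lt b k w j : (j < k)%N ->
  ((('X - b%:P) ^+ k * w)^`(j)).[b] = 0.
Proof.
elim: k j => [//|k IH] [|j] hj.
  by rewrite derivn0 exprS -mulrA horner_XsubCM.
by rewrite exprS -mulrA horner_derivn_XsubCM IH ?mulr0.
Qed.

Lemma derivn_XsubCX_eq b k w :
  ((('X - b%:P) ^+ k * w)^`(k)).[b] = k`!%:R * w.[b].
Proof.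
elim: k => [|k IH]; first by rewrite derivn0 expr0 mul1r fact0 mul1r.
by rewrite exprS -mulrA horner_derivn_XsubCM IH factS natrM mulrA.
Qed.

Lemma dvd_derivn0 b m u j : ('X - b%:P) ^+ m %| u -> (j < m)%N ->
  (u^`(j)).[b] = 0.
Proof.
move=> /dvdpP [w ->] hj; rewrite mulrC; exact: derivn_XsubCX_lt.
Qed.

Lemma mup_fact b q : q != 0 ->
  exists w, q = ('X - b%:P) ^+ (mup b q) * w /\ ~~ root w b.
Proof.
move=> qn0; set m := mup b q.
have : ('X - b%:P) ^+ m %| q by rewrite -mup_geq.
case/dvdpP => w hw; exists w; split; first by rewrite mulrC.
apply/negP => /factor_theorem [w1 hw1].
have : (m <= m)%N by [].
rewrite /m mup_leq // -/m => /negP; apply; apply/dvdpP; exists w1.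
by rewrite {1}hw hw1 exprS mulrA.
Qed.

Lemma deriv_mup_neq0 b q : q != 0 -> (q^`(mup b q)).[b] != 0.
Proof.
move=> /(mup_fact b) [w [{2}-> hw]].
rewrite derivn_XsubCX_eq mulf_neq0 // pnatr_eq0 -lt0n fact_gt0 //.
Qed.

End PolyDeriv.

Lemma split_count (T : eqType) (r : seq T) (m : T -> nat) :
  (forall b, (m b <= count_mem b r)%N) ->
  exists s t, perm_eq r (s ++ t) /\ forall b, count_mem b s = m b.
Proof.
elim: r m => [|x r IH] m hm.
  exists [::], [::]; split => // b; have := hm b; rewrite /= leqn0 => /eqP ->.
  by [].
pose m' b := if b == x then (m x).-1 else m b.
have hm' : forall b, (m' b <= count_mem b r)%N.
  move=> b; rewrite /m'; have := hm b; rewrite /=.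
  case: (eqVneq b x) => [->|hbx] /=; first by lia.
  by [].
have [s [t [hp hc]]] := IH m' hm'.
case: (posnP (m x)) => mx0.
- exists s, (x :: t); split.
    apply/permP => a /=; rewrite count_cat /= (permP hp a) count_cat; lia.
  move=> b; rewrite hc /m'; case: eqP => [->|//]; by rewrite mx0.
- exists (x :: s), t; split; first by rewrite cat_cons perm_cons.
  move=> b /=; rewrite hc /m'; case: (eqVneq b x) => [->|hbx].
    move=> /=; lia.
  by [].
Qed.
Section Setting.
Variables (R : realType) (Om : set (CC R)) (V : lmodType (CC R))
  (ip : V -> V -> CC R) (ev : V -> CC R -> CC R) (S : V -> V).
Hypothesis HA : standing_assumptions Om ip ev S.
Local Notation C := (CC R).
Local Notation N := (hnorm ip).

Lemma Hip : inner_product ip.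
Proof. by case: HA => [[_ []]]. Qed.

Lemma Nge0 x : 0 <= N x. Proof. exact (N_ge0 Hip x). Qed.
Lemma Nreal x : N x \is Num.real. Proof. exact (N_real Hip x). Qed.
Lemma NZ' a x : N (a *: x) = `|a| * N x. Proof. exact (NZ Hip a x). Qed.
Lemma NB' x y : N (x - y) = N (y - x). Proof. exact (NB Hip x y). Qed.
Lemma NN' x : N (- x) = N x. Proof. exact (NN Hip x). Qed.
Lemma ND x y : N (x + y) <= N x + N y. Proof. exact (NDle Hip x y). Qed.
Lemma NBl x y : N (x - y) <= N x + N y. Proof. exact (NBle Hip x y). Qed.
Lemma N0' : N 0 = 0. Proof. exact (N0 Hip). Qed.
Lemma Nsum (I : Type) (r : seq I) (f : I -> V) :
  N (\sum_(i <- r) f i) <= \sum_(i <- r) N (f i).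
Proof. exact (N_sum Hip r f). Qed.

Lemma ev_lin a f g z : Om z -> ev (a *: f + g) z = a * ev f z + ev g z.
Proof. by case: HA => _ [h _] _ _ _; apply: h. Qed.

Lemma ev_inj0 f : (forall z, Om z -> ev f z = 0) -> f = 0.
Proof. by case: HA => _ [_ h] _ _ _; apply: h. Qed.

Lemma ev_S f z : Om z -> ev (S f) z = z * ev f z.
Proof. by case: HA => _ _ _ [h _] _; apply: h. Qed.

Lemma reps u : exists f, represents Om ev f u.
Proof. by case: HA => _ _ _ _ [h _]; apply: h. Qed.

Lemma ev_inj f g : (forall z, Om z -> ev f z = ev g z) -> f = g.
Proof.
move=> h; apply/eqP; rewrite -subr_eq0; apply/eqP; apply: ev_inj0 => z zO.
have -> : f - g = (-1) *: g + f by rewrite scaleN1r addrC.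
by rewrite ev_lin // h // mulN1r addNr.
Qed.

Definition F (u : {poly C}) : V := proj1_sig (cid (reps u)).

Lemma F_rep u : represents Om ev (F u) u.
Proof. by rewrite /F; case: (cid _). Qed.

Lemma rep_F f u : represents Om ev f u -> f = F u.
Proof. by move=> h; apply: ev_inj => z zO; rewrite h // F_rep. Qed.

Lemma F_lin a u w : F (a *: u + w) = a *: F u + F w.
Proof.
apply/esym/rep_F => z zO.
by rewrite ev_lin // !F_rep // hornerD hornerZ.
Qed.

Lemma FD u w : F (u + w) = F u + F w.
Proof. by have := F_lin 1 u w; rewrite !scale1r. Qed.
Lemma F0 : F 0 = 0.
Proof.
have h := FD 0 0; rewrite addr0 in h.
by apply: (addrI (F 0)); rewrite addr0 -h.
Qed.
Lemma FZ a u : F (a *: u) = a *: F u.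
Proof. by rewrite -[a *: u]addr0 F_lin F0 addr0. Qed.
Lemma FN u : F (- u) = - F u.
Proof. by rewrite -(scaleN1r u) FZ scaleN1r. Qed.
Lemma FB u w : F (u - w) = F u - F w.
Proof. by rewrite FD FN. Qed.

Lemma F_sum (I : Type) (r : seq I) (f : I -> {poly C}) :
  F (\sum_(i <- r) f i) = \sum_(i <- r) F (f i).
Proof.
apply: (big_ind2 (fun a b => F a = b)); first exact: F0.
  by move=> x1 x2 y1 y2 <- <-; rewrite FD.
by [].
Qed.

Lemma S_lin a f g : S (a *: f + g) = a *: S f + S g.
Proof.
apply: ev_inj => z zO.
by rewrite ev_S // !ev_lin // !ev_S // mulrDr mulrCA.
Qed.

Lemma FX u : F ('X * u) = S (F u).
Proof.
apply/esym/rep_F => z zO.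
by rewrite ev_S // F_rep // hornerM hornerX.
Qed.

Lemma SMex : exists M : C, forall f, N (S f) <= M * N f.
Proof. by case: HA => _ _ _ [_ h] _. Qed.

Definition M0 : C := `|proj1_sig (cid SMex)|.

Lemma M0_ge0 : 0 <= M0.
Proof. exact: normr_ge0. Qed.

Lemma SM0 f : N (S f) <= M0 * N f.
Proof.
rewrite /M0; case: (cid SMex) => M hM /=.
apply: le_normM; [exact: Nreal | exact: Nge0 | exact: hM].
Qed.

Lemma FXn k u : F ('X^k * u) = iter k S (F u).
Proof.
elim: k => [|k IH]; first by rewrite expr0 mul1r.
by rewrite exprS -mulrA FX IH.
Qed.

Lemma NFXn k u : N (F ('X^k * u)) <= M0 ^+ k * N (F u).
Proof.
rewrite FXn; elim: k => [|k IH]; first by rewrite expr0 mul1r.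
rewrite /= exprS -mulrA; apply: le_trans (SM0 _) _.
by rewrite ler_wpM2l // M0_ge0.
Qed.

Definition Kp (r : {poly C}) : C := \sum_(k < size r) `|r`_k| * M0 ^+ k.

Lemma Kp_ge0 r : 0 <= Kp r.
Proof. by apply: sumr_ge0 => k _; rewrite mulr_ge0 ?exprn_ge0 ?M0_ge0. Qed.

Lemma mul_expand (r u : {poly C}) :
  r * u = \sum_(k < size r) r`_k *: ('X^k * u).
Proof.
rewrite -{1}(coefK r) poly_def mulr_suml.
by apply: eq_bigr => k _; rewrite scalerAl.
Qed.

Lemma F_mul r u : F (r * u) = \sum_(k < size r) r`_k *: iter k S (F u).
Proof.
rewrite mul_expand F_sum; apply: eq_bigr => k _.
by rewrite FZ FXn.
Qed.

Lemma NFmul r u : N (F (r * u)) <= Kp r * N (F u).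
Proof.
rewrite mul_expand F_sum /Kp mulr_suml.
apply: le_trans (Nsum _ _) _.
apply: ler_sum => k _; rewrite FZ NZ' -mulrA ler_wpM2l //.
exact: NFXn.
Qed.

Lemma dens f e : 0 < e -> exists u, N (f - F u) < e.
Proof.
move=> e0; case: HA => _ _ _ _ [_ h].
have [u [g [hg hN]]] := h f e e0.
by exists u; rewrite -(rep_F hg).
Qed.

Definition Clos (u : {poly C}) : set V :=
  fun x => forall e, 0 < e -> exists r, N (x - F (r * u)) < e.

Lemma cyc_Clos f u : represents Om ev f u -> cyc ip S f = Clos u.
Proof.
move/rep_F => ->; apply/funext => x; apply/propext; rewrite /cyc /Clos.
by split=> h e e0; have [r hr] := h e e0; exists r; rewrite ?F_mul // -F_mul.
Qed.

Lemma Clos_self u : Clos u (F u).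
Proof. by move=> e e0; exists 1; rewrite mul1r subrr N0'. Qed.

Lemma Clos_mul v w u : Clos u (F w) -> Clos (v * u) (F (v * w)).
Proof.
move=> h e e0.
have [e'0 he'] := small_mul (Kp_ge0 v) e0.
have [r hr] := h _ e'0.
exists r.
have -> : F (v * w) - F (r * (v * u)) = F (v * (w - r * u)).
  by rewrite -FB mulrBr mulrCA.
apply: le_lt_trans (NFmul _ _) _; apply: le_lt_trans he'.
by rewrite FB ler_wpM2l ?Kp_ge0 // ltW.
Qed.

Lemma Clos_trans u w : Clos u (F w) -> forall x, Clos w x -> Clos u x.
Proof.
move=> h x hx e e0.
have e20 : 0 < e / 2 by rewrite divr_gt0.
have [r hr] := hx _ e20.
have [r' hr'] := Clos_mul r h e20.
exists (r' * r).
have -> : x - F (r' * r * u) = (x - F (r * w)) + (F (r * w) - F (r' * (r * u))).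
  by rewrite mulrA addrA subrK.
apply: le_lt_trans (ND _ _) _.
by rewrite [e]splitr ltrD.
Qed.

Lemma Clos_eq u w : Clos u (F w) -> Clos w (F u) -> Clos u = Clos w.
Proof.
move=> h1 h2; apply/funext => x; apply/propext; split.
- exact: Clos_trans h2 x.
- exact: Clos_trans h1 x.
Qed.


Lemma represents_F u : represents Om ev (F u) u.
Proof. exact: F_rep. Qed.

Lemma repro_F b m (L : V -> C) :
  (forall (p : {poly C}) (f : V), represents Om ev f p -> L f = (p^`(m)).[b]) ->
  forall u, L (F u) = (u^`(m)).[b].
Proof. by move=> h u; apply: h; exact: F_rep. Qed.

Lemma repro_down b k : reproducible Om ip ev b k.+1 -> reproducible Om ip ev b k.
Proof.
move=> [L [Llin [M hM] Lrep]].
pose L' := fun f => L (S f - b *: f) / k.+1%:R.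
have k0 : k.+1%:R != 0 :> C by rewrite pnatr_eq0.
exists L'; split.
- move=> a x y; rewrite /L'.
  have -> : S (a *: x + y) - b *: (a *: x + y) = a *: (S x - b *: x) + (S y - b *: y).
    by rewrite S_lin !scalerDr !scalerN !scalerA [b * a]mulrC opprD addrACA.
  by rewrite Llin mulrDl mulrA.
- exists (`|M| * (M0 + `|b|) / `|k.+1%:R|) => x; rewrite /L' normrM normfV.
  rewrite mulrAC ler_pM2r ?invr_gt0 ?normr_gt0 //.
  have h1 : `|L (S x - b *: x)| <= `|M| * N (S x - b *: x).
    by apply: le_normM; rewrite ?normr_real ?Nge0 ?hM.
  apply: le_trans h1 _; rewrite -mulrA ler_wpM2l //.
  apply: le_trans (NBl _ _) _; rewrite mulrDl NZ' lerD2r.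
  exact: SM0.
- move=> p f /rep_F ->; rewrite /L'.
  have -> : S (F p) - b *: F p = F (('X - b%:P) * p).
    by rewrite mulrBl -FX mul_polyC -FZ FB.
  by rewrite (repro_F Lrep) horner_derivn_XsubCM mulrC mulKf.
Qed.

Lemma repro_le b j k : (k <= j)%N -> reproducible Om ip ev b j ->
  reproducible Om ip ev b k.
Proof.
elim: j => [|j IH]; first by rewrite leqn0 => /eqP ->.
rewrite leq_eqVlt => /orP [/eqP -> //|]; rewrite ltnS => hk hj.
exact/IH/repro_down.
Qed.

Lemma Ext (Lam : {poly C} -> C) (K : C) :
  (forall a u w, Lam (a *: u + w) = a * Lam u + Lam w) -> 0 <= K ->
  (forall u, `|Lam u| <= K * N (F u)) ->
  exists L : V -> C, [/\ (forall a x y, L (a *: x + y) = a * L x + L y),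
     (exists M, forall x, `|L x| <= M * N x) & (forall u, L (F u) = Lam u)].
Proof.
move=> Llin K0 Lb.
have Lam0 : Lam 0 = 0.
  have h := Llin 1 0 0; rewrite scale1r addr0 mul1r in h.
  by apply: (addrI (Lam 0)); rewrite addr0 -h.
have LamD u w : Lam (u + w) = Lam u + Lam w by have := Llin 1 u w; rewrite scale1r mul1r.
have LamZ a u : Lam (a *: u) = a * Lam u by have := Llin a u 0; rewrite addr0 Lam0 addr0.
have LamB u w : Lam (u - w) = Lam u - Lam w by rewrite LamD -(scaleN1r w) LamZ mulN1r.
have LamF u w : `|Lam u - Lam w| <= K * N (F u - F w) by rewrite -LamB -FB Lb.
have K20 : 0 <= 2 * K by rewrite mulr_ge0.
pose P f c := forall u, `|Lam u - c| <= (2 * K) * N (f - F u).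
have Pex : forall f, exists c, P f c.
  move=> f.
  have := @sup_centerC R {poly C} 0 Lam (fun u => complex.Re (K * N (f - F u))).
  case.
    move=> u v; rewrite rmorphD /= !ReC_ge0 ?mulr_ge0 ?Nge0 //.
    apply: le_trans (LamF u v) _; rewrite -mulrDr ler_wpM2l //.
    have -> : F u - F v = (f - F v) - (f - F u).
      by rewrite opprB [RHS]addrC addrA subrK.
    by apply: le_trans (NBl _ _) _; rewrite addrC.
  move=> c hc; apply: (@ex_intro _ _ c); rewrite /P => u; have := hc u.
  by rewrite realC_mul2 ReC_ge0 ?mulr_ge0 ?Nge0 // mulrA.
pose L f := proj1_sig (cid (Pex f)).
have PL f : P f (L f) by rewrite /L; case: (cid _).
pose Q f c := forall e, 0 < e -> exists u, N (f - F u) < e /\ `|Lam u - c| < e.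
have Quniq f c : Q f c -> c = L f.
  move=> hQ; apply/eqP; rewrite -subr_eq0 -normr_le0; apply/ler_addgt0Pr => e e0.
  rewrite add0r.
  have K21 : 0 < 2 * K + 1 by rewrite ltr_wpDl.
  have e'0 : 0 < e / (2 * K + 1) by rewrite divr_gt0.
  have [u [hu1 hu2]] := hQ _ e'0.
  have -> : c - L f = (Lam u - L f) - (Lam u - c) by rewrite opprB [RHS]addrC addrA subrK.
  apply: le_trans (ler_normB _ _) _.
  have -> : e = 2 * K * (e / (2 * K + 1)) + e / (2 * K + 1).
    by field; rewrite gt_eqF.
  apply: lerD; last exact: ltW.
  apply: le_trans (PL f u) _; rewrite ler_wpM2l //; exact: ltW.
exists L; split.
- move=> a x y; apply/esym/Quniq => e e0.
  set Kc := (`|a| + 1) * (2 * K + 1).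
  have Kc0 : 0 <= Kc by rewrite mulr_ge0 ?addr_ge0 // ler_wpDl.
  have [d0 hd] := small_mul Kc0 e0.
  set d := e / (Kc + 1) in d0 hd.
  have [uf huf] := dens x d0.
  have [ug hug] := dens y d0.
  exists (a *: uf + ug); split.
  + have -> : a *: x + y - F (a *: uf + ug) = a *: (x - F uf) + (y - F ug).
      by rewrite F_lin opprD addrACA scalerBr.
    apply: le_lt_trans (ND _ _) _; rewrite NZ'.
    apply: le_lt_trans hd.
    have h1 : `|a| * N (x - F uf) + N (y - F ug) <= (`|a| + 1) * d.
      rewrite mulrDl mul1r; apply: lerD; last exact: ltW.
      by rewrite ler_wpM2l // ltW.
    apply: le_trans h1 _; rewrite /Kc -mulrA ler_wpM2l ?addr_ge0 //.
    by rewrite -{1}(mul1r d) ler_wpM2r ?(ltW d0) // lerDr mulr_ge0.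
  + have -> : Lam (a *: uf + ug) - (a * L x + L y) = a * (Lam uf - L x) + (Lam ug - L y).
      by rewrite Llin mulrBr opprD addrACA.
    apply: le_lt_trans (ler_normD _ _) _; rewrite normrM.
    apply: le_lt_trans hd.
    have h1 : `|a| * `|Lam uf - L x| + `|Lam ug - L y| <= (`|a| + 1) * ((2 * K) * d).
      rewrite mulrDl mul1r; apply: lerD.
        rewrite ler_wpM2l //; apply: le_trans (PL x uf) _.
        by rewrite ler_wpM2l // ltW.
      by apply: le_trans (PL y ug) _; rewrite ler_wpM2l // ltW.
    apply: le_trans h1 _; rewrite /Kc -[X in _ <= X]mulrA ler_wpM2l ?addr_ge0 //.
    by apply: ler_wpM2r; [exact: ltW | rewrite lerDl].
- exists (2 * K) => x; have := PL x 0.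
  by rewrite Lam0 F0 subr0 sub0r normrN.
- move=> u; apply/esym/Quniq => e e0; exists u.
  by rewrite subrr N0' subrr normr0.
Qed.

Definition good (s : seq C) :=
  forall b j, (j < count_mem b s)%N -> reproducible Om ip ev b j.

Lemma good_cons a s : good (a :: s) -> good s.
Proof.
move=> h b j hj; apply: h; apply: leq_trans hj _.
by rewrite /= leq_addl.
Qed.

Lemma prod_neq0 (s : seq C) : \prod_(x <- s) ('X - x%:P) != 0.
Proof. exact/monic_neq0/monic_prod_XsubC. Qed.

Lemma deriv_sum_horner k b n (c : nat -> C) (E : nat -> {poly C}) :
  ((\sum_(i < n) c i *: E i)^`(k)).[b] = \sum_(i < n) c i * ((E i)^`(k)).[b].
Proof.
rewrite linear_sum horner_sum; apply: eq_bigr => i _.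
by rewrite linearZ /= hornerZ.
Qed.

Lemma decompH (s : seq C) : good s ->
  exists n (l : nat -> V -> C) (E : nat -> {poly C}) (Kb : nat -> C),
    [/\ (forall i, 0 <= Kb i), (forall i f, `|l i f| <= Kb i * N f) &
        (forall u, \prod_(x <- s) ('X - x%:P) %| u - \sum_(i < n) l i (F u) *: E i)].
Proof.
elim: s => [|a s IH] hg.
  exists 0%N, (fun _ _ => 0), (fun _ => 0), (fun _ => 0); split => //.
  - by move=> i f; rewrite normr0 mul0r.
  - by move=> u; rewrite big_nil dvd1p.
have [n [l [E [Kb [Kb0 hb hd]]]]] := IH (good_cons hg).
set k := count_mem a s.
have : reproducible Om ip ev a k by apply: hg; rewrite /= eqxx.
move=> [L [Llin [M hM] Lrep]].
set g := \prod_(x <- s) ('X - x%:P).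
have gn0 : g != 0 := prod_neq0 s.
have mupg : mup a g = k by rewrite mu_prod_XsubC.
have [w [hw wa]] := mup_fact a gn0; rewrite mupg in hw.
set c : C := k`!%:R * w.[a].
have cn0 : c != 0 by rewrite mulf_neq0 // pnatr_eq0 -lt0n fact_gt0.
pose e i := ((E i)^`(k)).[a].
pose ln f := (L f - \sum_(i < n) l i f * e i) / c.
exists n.+1, (fun i f => if i == n then ln f else l i f),
  (fun i => if i == n then g else E i),
  (fun i => if i == n then (`|M| + \sum_(j < n) Kb j * `|e j|) / `|c| else Kb i).
split.
- move=> i; case: ifP => _ //.
  by rewrite divr_ge0 ?addr_ge0 ?normr_ge0 ?sumr_ge0 // => j _; rewrite mulr_ge0.
- move=> i f; case: ifP => _ //.
  rewrite /ln normrM normfV mulrAC ler_pM2r ?invr_gt0 ?normr_gt0 //.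
  apply: le_trans (ler_normB _ _) _; rewrite mulrDl; apply: lerD.
    by apply: le_normM; rewrite ?normr_real ?Nge0 ?hM.
  apply: le_trans (ler_norm_sum _ _ _) _; rewrite mulr_suml; apply: ler_sum => j _.
  rewrite normrM mulrAC ler_wpM2r //; exact: hb.
- move=> u.
  rewrite big_ord_recr /= eqxx.
  have -> : \sum_(i < n) (if widen_ord (leqnSn n) i == n :> nat then ln (F u) else l (widen_ord (leqnSn n) i) (F u))
       *: (if widen_ord (leqnSn n) i == n :> nat then g else E (widen_ord (leqnSn n) i))
       = \sum_(i < n) l i (F u) *: E i.
    by apply: eq_bigr => i _ /=; rewrite ltn_eqF.
  set T := \sum_(i < n) l i (F u) *: E i.
  have /dvdpP [s0 hs0] := hd u.
  have hL : L (F u) = \sum_(i < n) l i (F u) * e i + c * s0.[a].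
    have eu : u = s0 * g + T by rewrite -hs0 subrK.
    rewrite (repro_F Lrep) {1}eu derivnD hornerD addrC /T.
    rewrite (deriv_sum_horner k a n (fun i => l i (F u)) E); congr (_ + _).
    by rewrite hw mulrC -mulrA derivn_XsubCX_eq hornerM /c mulrA.
  have hsa : s0.[a] = ln (F u).
    by rewrite /ln hL addrC addKr mulrC mulKf.
  have -> : u - (T + ln (F u) *: g) = (s0 - (ln (F u))%:P) * g.
    by rewrite opprD addrA hs0 mulrBl mul_polyC.
  rewrite big_cons -/g dvdp_mul2r // dvdp_XsubCl /root hornerD hornerN hornerC hsa subrr eqxx //.
Qed.

Lemma keyK (s : seq C) b : good s -> ~ reproducible Om ip ev b (count_mem b s) ->
  Clos (\prod_(x <- s) ('X - x%:P) * ('X - b%:P)) (F (\prod_(x <- s) ('X - x%:P))).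
Proof.
move=> hg hnr.
set g := \prod_(x <- s) ('X - x%:P).
set m := count_mem b s.
case: (pselect (Clos (g * ('X - b%:P)) (F g))) => // hn; exfalso; apply: hnr.
have [e [e0 he]] : exists e, 0 < e /\ forall r, e <= N (F g - F (r * (g * ('X - b%:P)))).
  case: (pselect (exists e, 0 < e /\ forall r, e <= N (F g - F (r * (g * ('X - b%:P)))))) => // hne.
  exfalso; apply: hn => e e0.
  case: (pselect (exists r, N (F g - F (r * (g * ('X - b%:P)))) < e)) => // hr.
  exfalso; apply: hne; exists e; split => // r.
  rewrite (real_leNgt (gtr0_real e0) (Nreal _)); apply/negP => h; apply: hr; exists r.
  exact: h.
have hbound : forall r, `|r.[b]| * e <= N (F (r * g)).
  move=> r; have [rb0|rbn0] := eqVneq r.[b] 0.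
    by rewrite rb0 normr0 mul0r Nge0.
  have : root (r - (r.[b])%:P) b by rewrite /root hornerD hornerN hornerC subrr.
  case/factor_theorem => r1 hr1.
  have hr : r = (r.[b])%:P + r1 * ('X - b%:P) by rewrite -hr1 addrC subrK.
  have key : forall (c : C) r1, c != 0 ->
      F ((c%:P + r1 * ('X - b%:P)) * g) =
      c *: (F g - F ((- ((c^-1)%:P * r1)) * (g * ('X - b%:P)))).
    move=> c r2 cn0.
    have cc : c%:P * (c^-1)%:P = 1 :> {poly C} by rewrite -polyCM mulfV.
    rewrite -FB -FZ; congr F.
    rewrite -mul_polyC; apply/eqP; rewrite -subr_eq0; apply/eqP.
    transitivity ((1 - c%:P * (c^-1)%:P) * (r2 * g * ('X - b%:P))).
      by ring.
    by rewrite cc subrr mul0r.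
  have -> : F (r * g) = F (((r.[b])%:P + r1 * ('X - b%:P)) * g) by rewrite -hr.
  rewrite key //.
  by rewrite NZ' ler_wpM2l ?normr_ge0.
have [n [l [E [Kb [Kb0 hb hd]]]]] := decompH hg.
have gn0 : g != 0 := prod_neq0 s.
have mupg : mup b g = m by rewrite mu_prod_XsubC.
have [w [hw wb]] := mup_fact b gn0; rewrite mupg in hw.
set c0 : C := m`!%:R * w.[b].
pose Lam u := (u^`(m)).[b].
pose ei i := ((E i)^`(m)).[b].
pose Kc := \sum_(i < n) Kb i * `|ei i| +
   `|c0| * ((1 + \sum_(i < n) Kb i * N (F (E i))) / e).
have Lamlin : forall a u w, Lam (a *: u + w) = a * Lam u + Lam w.
  by move=> a u w'; rewrite /Lam derivnD derivnZ hornerD hornerZ.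
have S0 : 0 <= \sum_(i < n) Kb i * N (F (E i)).
  by apply: sumr_ge0 => i _; rewrite mulr_ge0 ?Nge0.
have Kc0 : 0 <= Kc.
  apply: addr_ge0.
    by apply: sumr_ge0 => i _; rewrite mulr_ge0.
  by rewrite mulr_ge0 // divr_ge0 ?addr_ge0 // ltW.
have Lb : forall u, `|Lam u| <= Kc * N (F u).
  move=> u; have /dvdpP [s0 hs0] := hd u.
  set T := \sum_(i < n) l i (F u) *: E i in hs0.
  have eu : u = s0 * g + T by rewrite -hs0 subrK.
  have e1 : Lam u = \sum_(i < n) l i (F u) * ei i + c0 * s0.[b].
    rewrite /Lam {1}eu derivnD hornerD addrC /T.
    rewrite (deriv_sum_horner m b n (fun i => l i (F u)) E); congr (_ + _).
    by rewrite hw mulrC -mulrA derivn_XsubCX_eq hornerM /c0 mulrA.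
  have hFT : N (F T) <= (\sum_(i < n) Kb i * N (F (E i))) * N (F u).
    rewrite /T F_sum mulr_suml; apply: le_trans (Nsum _ _) _; apply: ler_sum => i _.
    by rewrite FZ NZ' mulrAC ler_wpM2r ?Nge0 // hb.
  have hs0b : `|s0.[b]| * e <= (1 + \sum_(i < n) Kb i * N (F (E i))) * N (F u).
    apply: le_trans (hbound s0) _.
    have -> : s0 * g = u - T by rewrite hs0.
    rewrite FB; apply: le_trans (NBl _ _) _.
    by rewrite mulrDl mul1r lerD2l.
  have hs0b' : `|s0.[b]| <= (1 + \sum_(i < n) Kb i * N (F (E i))) * N (F u) / e.
    by rewrite ler_pdivlMr.
  rewrite e1; apply: le_trans (ler_normD _ _) _; rewrite /Kc mulrDl; apply: lerD.
    apply: le_trans (ler_norm_sum _ _ _) _; rewrite mulr_suml; apply: ler_sum => i _.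
    by rewrite normrM mulrAC ler_wpM2r ?normr_ge0 // hb.
  rewrite normrM -mulrA ler_wpM2l ?normr_ge0 //; apply: le_trans hs0b' _.
  by rewrite mulrAC.
have [L [Llin hLb hLF]] := Ext Lamlin Kc0 Lb.
exists L; split => //.
by move=> p f /rep_F ->; exact: hLF.
Qed.

Lemma closG (s t : seq C) (c : C) : good s -> c != 0 ->
  (forall b, b \in t -> ~ reproducible Om ip ev b (count_mem b s)) ->
  Clos (c *: (\prod_(x <- s) ('X - x%:P) * \prod_(x <- t) ('X - x%:P)))
  = Clos (\prod_(x <- s) ('X - x%:P)).
Proof.
move=> hg cn0 ht; set g := \prod_(x <- s) ('X - x%:P).
have h1 : forall t', (forall b, b \in t' -> ~ reproducible Om ip ev b (count_mem b s)) ->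
    Clos (g * \prod_(x <- t') ('X - x%:P)) (F g).
  elim=> [|x t' IH] ht'.
    by rewrite big_nil mulr1; exact: Clos_self.
  have hx : ~ reproducible Om ip ev x (count_mem x s) by apply: ht'; rewrite mem_head.
  have IH' : Clos (g * \prod_(y <- t') ('X - y%:P)) (F g).
    by apply: IH => b hb; apply: ht'; rewrite inE hb orbT.
  have A := Clos_mul ('X - x%:P) IH'.
  have B := keyK hg hx.
  rewrite big_cons.
  have -> : g * (('X - x%:P) * \prod_(y <- t') ('X - y%:P)) =
            ('X - x%:P) * (g * \prod_(y <- t') ('X - y%:P)) by rewrite mulrCA.
  apply: (Clos_trans A); rewrite mulrC; exact: B.
apply: Clos_eq.
- have hq := h1 t ht.
  apply: (Clos_trans _ hq) => e e0; exists ((c^-1)%:P).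
  by rewrite mul_polyC scalerA mulVf // scale1r subrr N0'.
- move=> e e0; exists (c%:P * \prod_(x <- t) ('X - x%:P)).
  have -> : c *: (g * \prod_(x <- t) ('X - x%:P)) = c%:P * \prod_(x <- t) ('X - x%:P) * g.
    by rewrite -mul_polyC [g * _]mulrC mulrA.
  by rewrite subrr N0'.
Qed.

Section Counting.
Variable b : C.
Local Notation f n := (`[< ro_ge Om ip ev b n >] : nat).

Lemma ro_ge_down n k : ro_ge Om ip ev b n -> (k <= n)%N -> ro_ge Om ip ev b k.
Proof. by move=> [j [hj hr]] hk; exists j; split => //; exact: leq_trans hk hj. Qed.

Lemma cnt_le m : (\sum_(n < m) f n <= m)%N.
Proof.
elim: m => [|m IH]; first by rewrite big_ord0.
rewrite big_ord_recr /= -addn1; exact: leq_add IH (leq_b1 _).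
Qed.

Lemma cnt_all m : (forall n, (n < m)%N -> ro_ge Om ip ev b n) -> \sum_(n < m) f n = m.
Proof.
elim: m => [|m IH] h; first by rewrite big_ord0.
have IH' : \sum_(n < m) f n = m.
  by apply: IH => n hn; exact: (h n (ltnW hn)).
have hm : `[< ro_ge Om ip ev b m >] by apply/asboolP; exact: (h m (ltnSn m)).
rewrite big_ord_recr /= IH' hm; exact: addn1.
Qed.

Lemma cnt_small j m : ~ ro_ge Om ip ev b j -> (\sum_(n < m) f n <= j)%N.
Proof.
move=> hj; elim: m => [|m IH]; first by rewrite big_ord0.
case: (ltnP m j) => hmj.
  by apply: leq_trans (cnt_le _) _.
rewrite big_ord_recr /= asboolF ?addn0 //.
by move=> hr; apply: hj; apply: ro_ge_down hr hmj.
Qed.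

Lemma cnt_big j m : ro_ge Om ip ev b j -> (j < m)%N -> (j.+1 <= \sum_(n < m) f n)%N.
Proof.
move=> hj; elim: m => [//|m IH] hm.
rewrite big_ord_recr /=.
case: (ltnP j m) => hjm.
  by apply: leq_trans (IH hjm) _; rewrite leq_addr.
have ejm : j = m by apply/eqP; rewrite eqn_leq hjm -ltnS hm.
rewrite cnt_all; last by move=> n hn; apply: ro_ge_down hj _; rewrite ejm ltnW.
by rewrite asboolT ?addn1 ?ejm // -ejm.
Qed.

End Counting.

Lemma RM1 p b : (Rmult Om ip ev p b <= mup b p)%N.
Proof. by rewrite /Rmult; case: ifP => _ //; exact: cnt_le. Qed.

Lemma RM2 p b j : (j < Rmult Om ip ev p b)%N -> reproducible Om ip ev b j.
Proof.
rewrite /Rmult; case: ifP => _ // hj.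
case: (pselect (ro_ge Om ip ev b j)) => [[j' [hj' hr]]|hn].
  exact: repro_le hj' hr.
by have := cnt_small (mup b p) hn; rewrite leqNgt hj.
Qed.

Lemma RM3 p b : (Rmult Om ip ev p b < mup b p)%N ->
  ~ reproducible Om ip ev b (Rmult Om ip ev p b).
Proof.
rewrite /Rmult; case: ifP => [_ hlt hr|/negbT/asboolPn hn _ //].
set k := (\sum_(n < mup b p) `[< ro_ge Om ip ev b n >])%N in hlt hr *.
have hro : ro_ge Om ip ev b k by exists k; split.
by have := cnt_big hro hlt; rewrite ltnn.
Qed.

Lemma RMfwd p q b : (Rmult Om ip ev q b < Rmult Om ip ev p b)%N ->
  [/\ reproducible Om ip ev b (Rmult Om ip ev q b),
      mup b q = Rmult Om ip ev q b & (Rmult Om ip ev q b < mup b p)%N].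
Proof.
move=> hlt.
split; last exact: leq_trans hlt (RM1 p b).
  by apply: (RM2 (p := p)).
move: hlt; rewrite /Rmult; case: ifP => // h0 hlt.
set k := (\sum_(n < mup b q) `[< ro_ge Om ip ev b n >])%N in hlt *.
have hro : ro_ge Om ip ev b k.
  case: (pselect (ro_ge Om ip ev b k)) => // hn.
  by have := cnt_small (mup b p) hn; rewrite leqNgt hlt.
apply/eqP; rewrite eqn_leq cnt_le andbT leqNgt; apply/negP => h.
by have := cnt_big hro h; rewrite ltnn.
Qed.

Lemma fwd p q b : p != 0 -> q != 0 -> Clos p (F q) ->
  ~ (Rmult Om ip ev q b < Rmult Om ip ev p b)%N.
Proof.
move=> pn0 qn0 hc hlt; have [hr hmq hmp] := RMfwd hlt.
move: hr hmq hmp; set k := Rmult Om ip ev q b => hr hmq hmp.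
case: hr => L [Llin [M hM] Lrep].
have LF := repro_F Lrep.
have hq : L (F q) != 0 by rewrite LF -hmq deriv_mup_neq0.
have hp : forall r, L (F (r * p)) = 0.
  move=> r; rewrite LF; apply: (@dvd_derivn0 _ b (mup b p)) => //.
  by apply: dvdp_mull; rewrite -mup_geq.
have Lsub x y : L (x - y) = L x - L y.
  have -> : x - y = (-1) *: y + x by rewrite scaleN1r addrC.
  by rewrite Llin mulN1r addrC.
move/negP: hq; apply; rewrite -normr_le0; apply/ler_addgt0Pr => e e0; rewrite add0r.
have [d0 hd] := small_mul (normr_ge0 M) e0.
have [r hr] := hc _ d0.
have -> : L (F q) = L (F q - F (r * p)) by rewrite Lsub hp subr0.
have h1 : `|L (F q - F (r * p))| <= `|M| * N (F q - F (r * p)).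
  by apply: le_normM; rewrite ?normr_real ?Nge0 ?hM.
apply: le_trans h1 _; apply: le_trans (ltW hd); rewrite ler_wpM2l //; exact: ltW.
Qed.

Lemma decomp p : p != 0 -> exists s t c,
  [/\ c != 0, p = c *: (\prod_(x <- s) ('X - x%:P) * \prod_(x <- t) ('X - x%:P)),
      (forall b, count_mem b s = Rmult Om ip ev p b), good s &
      (forall b, b \in t -> ~ reproducible Om ip ev b (count_mem b s))].
Proof.
move=> pn0; case: (closed_field_poly_normal p) => r hr.
have cn0 : lead_coef p != 0 by rewrite lead_coef_eq0.
have hmup b : mup b p = count_mem b r.
  rewrite {1}hr -mul_polyC mupM ?polyC_eq0 ?prod_neq0 // mupNroot ?rootC //.
  by rewrite mu_prod_XsubC.
have [s [t [hperm hcnt]]] := @split_count _ r (fun b => Rmult Om ip ev p b)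
   (fun b => leq_trans (RM1 p b) (eq_leq (hmup b))).
exists s, t, (lead_coef p); split => //.
- by rewrite {1}hr (perm_big _ hperm) big_cat.
- by move=> b j; rewrite hcnt; exact: RM2.
- move=> b hb; rewrite hcnt; apply: RM3; rewrite hmup (permP hperm) count_cat -hcnt.
  by rewrite -[X in (X < _)%N]addn0 ltn_add2l -has_count has_pred1.
Qed.
End Setting.
Unset Implicit Arguments.

Theorem mainTheorem8 (R : realType) (Om : set (CC R)) (V : lmodType (CC R))
    (ip : V -> V -> CC R) (ev : V -> CC R -> CC R) (S : V -> V)
    (HA : standing_assumptions Om ip ev S)
    (p q : {poly CC R}) (fp fq : V) :
  p != 0 -> q != 0 -> represents Om ev fp p -> represents Om ev fq q ->
  (cyc ip S fp = cyc ip S fq <->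
   (forall beta : CC R, Rmult Om ip ev p beta = Rmult Om ip ev q beta)).
Proof.
move=> pn0 qn0 hp hq.
rewrite (cyc_Clos HA hp) (cyc_Clos HA hq).
split.
- move=> hC b.
  have h1 : Clos HA p (F HA q) by rewrite hC; exact: Clos_self.
  have h2 : Clos HA q (F HA p) by rewrite -hC; exact: Clos_self.
  have n1 := fwd (b := b) pn0 qn0 h1.
  have n2 := fwd (b := b) qn0 pn0 h2.
  move: n1 n2; move: (Rmult Om ip ev p b) (Rmult Om ip ev q b) => x y; lia.
- move=> hR.
  have [s [t [c [cn0 hpe hcs hgs hts]]]] := decomp HA pn0.
  have [s' [t' [c' [cn0' hqe hcs' hgs' hts']]]] := decomp HA qn0.
  have hperm : perm_eq s' s.
    apply/allP => x _ /=; rewrite hcs hcs'; apply/eqP; exact: (esym (hR x)).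
  rewrite {1}hpe (closG HA hgs cn0 hts) {1}hqe (closG HA hgs' cn0' hts').
  by rewrite (perm_big _ hperm).
Qed.
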